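(* For any ultradiscrete ballean $(X,\mathcal E_X)$ we have $\operatorname{add}(\mathcal B_X)<\operatorname{cof}(\mathcal B_X)$.
   Context: A ballean is a pair $(X,\mathcal E_X)$ where $X$ is a set and $\mathcal E_X$ is a family of subsets of $X\times X$ (entourages) such that: each $E\in\mathcal E_X$ contains the diagonal $\Delta_X$; for any $E,F\in\mathcal E_X$ there is $D\in\mathcal E_X$ with $E\circ F^{-1}\subset D$; and $\bigcup\mathcal E_X=X\times X$. For $E\in\mathcal E_X$, $x\in X$, $A\subset X$: $E[x]=\{y:(x,y)\in E\}$, $E[A]=\bigcup_{a\in A}E[a]$. $B\subset X$ is bounded if $B\subset E[x]$ for some $E\in\mathcal E_X$, $x\in X$; $\mathcal B_X$ is the family of bounded sets, ordered by inclusion. Sets $A,B$ are asymptotically disjoint if $E[A]\cap E[B]\in\mathcal B_X$ for all $E\in\mathcal E_X$. $X$ is ultranormal if it contains no two unbounded asymptotically disjoint sets. $X$ is discrete if $X$ is unbounded and for every $E\in\mathcal E_X$ there is a bounded $B_E\subset X$ with $E[x]=\{x\}$ for all $x\in X\setminus B_E$; ultradiscrete means discrete and ultranormal. For a poset $P$, $\operatorname{add}(P)$ is the least cardinality of a subset without upper bound and $\operatorname{cof}(P)$ the least cardinality of a cofinal subset. *)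

(* Defs.v *)
From Stdlib Require Import Classical.

Set Implicit Arguments.

Definition set (X : Type) := X -> Prop.
Definition relation (X : Type) := X -> X -> Prop.

Definition subset {X : Type} (A B : set X) : Prop := forall x, A x -> B x.
Definition set_eq {X : Type} (A B : set X) : Prop := forall x, A x <-> B x.

Definition ball {X : Type} (E : relation X) (x : X) : set X := fun y => E x y.
Definition img {X : Type} (E : relation X) (A : set X) : set X :=
  fun y => exists a, A a /\ E a y.

(* Ballean axioms.  E o F^{-1} = {(x,y) : exists z, (x,z) in E and (z,y) in F^{-1}}. *)
Definition is_ballean {X : Type} (EE : relation X -> Prop) : Prop :=
  (forall E, EE E -> forall x, E x x) /\
  (forall E F, EE E -> EE F -> exists D, EE D /\
       forall x y, (exists z, E x z /\ F y z) -> D x y) /\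
  (forall x y, exists E, EE E /\ E x y).

Definition bounded {X : Type} (EE : relation X -> Prop) (B : set X) : Prop :=
  exists E x, EE E /\ subset B (ball E x).

Definition asymp_disjoint {X : Type} (EE : relation X -> Prop) (A B : set X) : Prop :=
  forall E, EE E -> bounded EE (fun y => img E A y /\ img E B y).

Definition ultranormal {X : Type} (EE : relation X -> Prop) : Prop :=
  ~ (exists A B : set X, ~ bounded EE A /\ ~ bounded EE B /\ asymp_disjoint EE A B).

Definition discrete {X : Type} (EE : relation X -> Prop) : Prop :=
  ~ bounded EE (fun _ => True) /\
  forall E, EE E -> exists B, bounded EE B /\
     forall x, ~ B x -> set_eq (ball E x) (fun y => y = x).

Definition ultradiscrete {X : Type} (EE : relation X -> Prop) : Prop :=
  discrete EE /\ ultranormal EE.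

Definition family (X : Type) := set X -> Prop.

Definition in_BX {X : Type} (EE : relation X -> Prop) (F : family X) : Prop :=
  forall A, F A -> bounded EE A.

Definition has_ub_BX {X : Type} (EE : relation X -> Prop) (F : family X) : Prop :=
  exists U, bounded EE U /\ forall A, F A -> subset A U.

Definition cofinal_BX {X : Type} (EE : relation X -> Prop) (C : family X) : Prop :=
  in_BX EE C /\ forall B, bounded EE B -> exists A, C A /\ subset B A.

(* Cardinal comparison of families, where a family is viewed as a set of
   subsets of X (subsets identified up to extensional equality):
   |F| <= |G| iff there is an injection F -> G. *)
Definition card_le {X : Type} (F G : family X) : Prop :=
  exists f : set X -> set X,
    (forall A, F A -> G (f A)) /\
    (forall A B, F A -> F B -> set_eq (f A) (f B) -> set_eq A B).

Definition card_lt {X : Type} (F G : family X) : Prop :=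
  card_le F G /\ ~ card_le G F.

(* add(B_X) < cof(B_X): since add(B_X) is the least cardinality of a subfamily
   of B_X without upper bound and cof(B_X) the least cardinality of a cofinal
   subfamily, this holds iff some subfamily without upper bound has cardinality
   strictly smaller than that of every cofinal subfamily. *)
Definition add_lt_cof {X : Type} (EE : relation X -> Prop) : Prop :=
  exists U : family X, in_BX EE U /\ ~ has_ub_BX EE U /\
    forall C, cofinal_BX EE C -> card_lt U C.

(* Main.v *)
From mathcomp Require Import ssreflect ssrfun ssrbool eqtype.
From mathcomp Require Import boolp wochoice.
From Stdlib Require Import ClassicalEpsilon FunctionalExtensionality.
Require Import Defs.
Set Implicit Arguments.

Lemma wo_prop (X : Type) : exists R : X -> X -> Prop,
  (forall x y z, R x y -> R y z -> R x z) /\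
  (forall x y, R x y -> R y x -> x = y) /\
  (forall x y, R x y \/ R y x) /\
  (forall P : X -> Prop, (exists x, P x) -> exists m, P m /\ forall y, P y -> R m y).
Proof.
have [R wo] := well_ordering_principle {classic X}.
have wo' : forall P : X -> Prop, (exists x, P x) -> exists m, (P m /\ forall y, P y -> R m y) /\
   forall m', (P m' /\ forall y, P y -> R m' y) -> m = m'.
  move=> P [x Px].
  have [m [[Pm lb] u]] := wo (fun z => `[< P z >]) (ex_intro _ x (introT (asboolP _) Px)).
  exists m; split; first split.
  - exact: (elimT (asboolP _) Pm).
  - move=> y Py; exact: (lb y (introT (asboolP _) Py)).
  - move=> m' [Pm' lm']; apply: u; split; first exact: (introT (asboolP _) Pm').
    by move=> y /(elimT (asboolP _)) /lm'.
have refl : forall x, R x x.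
  move=> x; have [m [[Pm lm] _]] := wo' (fun t => t = x) (ex_intro _ x erefl).
  by subst m; apply: lm.
have anti : forall x y, R x y -> R y x -> x = y.
  move=> x y Rxy Ryx.
  have [m [_ u]] := wo' (fun t => t = x \/ t = y) (ex_intro _ x (or_introl erefl)).
  have e1 : m = x.
    by apply: u; split; [left | move=> t [] ->].
  have e2 : m = y.
    by apply: u; split; [right | move=> t [] ->].
  by rewrite -e1 -e2.
exists R.
split; last split; last split.
- move=> x y z Rxy Ryz.
  have [m [[Pm lm] _]] := wo' (fun t => t = x \/ t = y \/ t = z) (ex_intro _ x (or_introl erefl)).
  case: Pm => [E|[E|E]]; subst m.
  + by apply: lm; right; right.
  + have Ryx := lm x (or_introl erefl).
    by rewrite (anti _ _ Rxy Ryx).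
  + have Rzy := lm y (or_intror (or_introl erefl)).
    by rewrite -(anti _ _ Ryz Rzy).
- exact: anti.
- move=> x y.
  have [m [[Pm lm] _]] := wo' (fun t => t = x \/ t = y) (ex_intro _ x (or_introl erefl)).
  case: Pm => E; subst m.
  + by left; apply: lm; right.
  + by right; apply: lm; left.
- by move=> P /wo' [m [H _]]; exists m.
Qed.

Lemma wf_rec (W : Type) (lt : W -> W -> Prop) (wf : well_founded lt) (A : Type)
  (F : forall w, (forall v, lt v w -> A) -> A) :
  exists h : W -> A, forall w, h w = F w (fun v _ => h v).
Proof.
exists (Fix wf (fun _ => A) F) => w.
apply: Fix_eq => x f g Hfg; f_equal.
apply: functional_extensionality_dep => y; apply: functional_extensionality_dep => p.
exact: Hfg.
Qed.

Section Ball.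
Variables (X : Type) (EE : relation X -> Prop).
Hypothesis Hb : is_ballean EE.

Lemma ent_refl E : EE E -> forall x, E x x.
Proof. by case: Hb => Hr _; apply: Hr. Qed.

Lemma ent_inv F : EE F -> exists F', EE F' /\ forall u v, F v u -> F' u v.
Proof.
move=> HF; case: Hb => Hr [Hc _].
have [D [HD HD']] := Hc F F HF HF.
exists D; split=> // u v H; apply: HD'; exists u; split=> //; exact: Hr.
Qed.

Lemma ent_comp E F : EE E -> EE F -> exists D, EE D /\ forall u z v, E u z -> F z v -> D u v.
Proof.
move=> HE HF; have [F' [HF' HF'i]] := ent_inv HF.
case: Hb => Hr [Hc _].
have [D [HD HD']] := Hc E F' HE HF'.
exists D; split=> // u z v H1 H2; apply: HD'; exists z; split=> //; exact: HF'i.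
Qed.

Lemma ent_union E F : EE E -> EE F -> exists D, EE D /\
  (forall u v, E u v -> D u v) /\ (forall u v, F u v -> D u v).
Proof.
move=> HE HF; have [D [HD HD']] := ent_comp HE HF.
exists D; split=> //; split=> u v H.
- apply: (HD' u v v) => //; exact: ent_refl.
- apply: (HD' u u v) => //; exact: ent_refl.
Qed.

Lemma bnd_sub A B : bounded EE B -> subset A B -> bounded EE A.
Proof. move=> [E [x [HE HB]]] HAB; exists E, x; split=> // y /HAB; exact: HB. Qed.

Lemma bnd_union A B : bounded EE A -> bounded EE B -> bounded EE (fun x => A x \/ B x).
Proof.
move=> [E [x [HE HA]]] [F [y [HF HB]]].
case: Hb => _ [_ Hcov].
have [G [HG Gxy]] := Hcov x y.
have [H [HH HH']] := ent_comp HG HF.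
have [D [HD [D1 D2]]] := ent_union HE HH.
exists D, x; split=> // z [/HA Az | /HB Bz].
- exact: D1.
- apply: D2; exact: HH' Gxy Bz.
Qed.

Lemma bnd_single a : bounded EE (fun y => y = a).
Proof.
case: Hb => _ [_ Hcov]; have [E [HE Eaa]] := Hcov a a.
by exists E, a; split=> // y ->.
Qed.

Lemma bnd_img E B : EE E -> bounded EE B -> bounded EE (img E B).
Proof.
move=> HE [F [x [HF HB]]].
have [D [HD HD']] := ent_comp HF HE.
exists D, x; split=> // y [b [Bb Eby]]; apply: HD' Eby; exact: HB.
Qed.

Hypothesis Hunb : ~ bounded EE (fun _ => True).

Lemma cof_no_ub C : cofinal_BX EE C -> forall V, bounded EE V ->
  (forall A, C A -> subset A V) -> False.
Proof.
move=> [HC1 HC2] V HV HCV; apply: Hunb; apply: (bnd_sub HV) => x _.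
have [A [CA HA]] := HC2 _ (bnd_union HV (bnd_single x)).
apply: (HCV A CA); apply: HA; by right.
Qed.

Lemma compl_nonempty S : bounded EE S -> exists x, ~ S x.
Proof.
move=> HS; apply: NNPP => H; apply: Hunb; apply: (bnd_sub HS) => x _.
apply: NNPP => Sx; apply: H; by exists x.
Qed.

Hypothesis Hsplit : forall A Y : set X, (forall x, A x -> Y x -> False) ->
  bounded EE A \/ bounded EE Y.
Variable x0 : X.

Section Wo.
Variables (W : Type) (lt : W -> W -> Prop).
Hypothesis ltT : forall u v w, lt u v -> lt v w -> lt u w.
Hypothesis ltTri : forall u v, lt u v \/ u = v \/ lt v u.
Hypothesis minP : forall P : W -> Prop, (exists w, P w) ->
  exists m, P m /\ forall v, lt v m -> ~ P v.

Lemma lt_wf : well_founded lt.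
Proof.
move=> w; apply: NNPP => Hw.
have [m [Hm Hmin]] := minP (fun v => ~ Acc lt v) (ex_intro _ w Hw).
apply: Hm; constructor => v Hv; apply: NNPP; exact: Hmin.
Qed.

Definition Bad (w : W) := exists G : W -> set X,
  (forall j, lt j w -> bounded EE (G j)) /\
  ~ bounded EE (fun x => exists j, lt j w /\ G j x).

Variables (ws : W) (G : W -> set X).
Hypothesis HGb : forall j, lt j ws -> bounded EE (G j).
Hypothesis HGu : ~ bounded EE (fun x => exists j, lt j ws /\ G j x).
Hypothesis Hmin : forall v, lt v ws -> ~ Bad v.

Lemma small_union k : lt k ws -> forall H : W -> set X,
  (forall j, lt j k -> bounded EE (H j)) ->
  bounded EE (fun x => exists j, lt j k /\ H j x).
Proof.
move=> Hk H HH; apply: NNPP => Hn; apply: (Hmin Hk); by exists H.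
Qed.

Definition U : family X := fun A => exists j, lt j ws /\ A = G j.

Lemma U_in : in_BX EE U.
Proof. by move=> A [j [Hj ->]]; apply: HGb. Qed.

Lemma U_noub : ~ has_ub_BX EE U.
Proof.
move=> [V [HV HUV]]; apply: HGu; apply: (bnd_sub HV) => x [j [Hj Gx]].
apply: (HUV (G j)) => //; by exists j.
Qed.

Lemma U_le C : cofinal_BX EE C -> card_le U C.
Proof.
move=> HC.
have [c0 [Cc0 _]] := (proj2 HC) _ (bnd_single x0).
pose R k (rec : forall j, lt j k -> set X) c := forall j (hj : lt j k), ~ set_eq c (rec j hj).
pose F k (rec : forall j, lt j k -> set X) :=
  epsilon (inhabits c0) (fun c => C c /\ ((exists c', C c' /\ R k rec c') -> R k rec c)).
have [h Hh] := @wf_rec W lt lt_wf _ F.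
have Hspec : forall k, C (h k) /\ ((exists c', C c' /\ R k (fun v _ => h v) c') -> R k (fun v _ => h v) (h k)).
  move=> k; rewrite Hh; apply: (epsilon_spec (inhabits c0) (fun c => C c /\ ((exists c', C c' /\ R k (fun v _ => h v) c') -> R k (fun v _ => h v) c))).
  case: (classic (exists c', C c' /\ R k (fun v _ => h v) c')) => [[c' [Cc' Rc']]|Hn].
  - by exists c'; split.
  - by exists c0; split=> // /Hn.
have Hh2 : forall k, lt k ws -> forall j, lt j k -> ~ set_eq (h k) (h j).
  move=> k Hk; apply: (proj2 (Hspec k)).
  apply: NNPP => Hn.
  have Hbu := small_union Hk h (fun j _ => (proj1 HC) _ (proj1 (Hspec j))).
  apply: (cof_no_ub HC Hbu) => A CA x Ax.
  apply: NNPP => Hx; apply: Hn; exists A; split=> // j hj Heq.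
  apply: Hx; exists j; split=> //; exact/Heq.
pose idx A := epsilon (inhabits ws) (fun j => lt j ws /\ A = G j).
exists (fun A => h (idx A)); split.
- by move=> A _; exact: (proj1 (Hspec _)).
- move=> A B HA HB Heq.
  have [Hi EA] : lt (idx A) ws /\ A = G (idx A) by apply: (epsilon_spec (inhabits ws) (fun j => lt j ws /\ A = G j)).
  have [Hi' EB] : lt (idx B) ws /\ B = G (idx B) by apply: (epsilon_spec (inhabits ws) (fun j => lt j ws /\ B = G j)).
  case: (ltTri (idx A) (idx B)) => [Hl|[Ee|Hl]].
  + exfalso; apply: (Hh2 _ Hi' _ Hl) => x; split=> H; apply/Heq => //.
  + by rewrite EA EB Ee => x.
  + exfalso; exact: (Hh2 _ Hi _ Hl).
Qed.

Lemma diagonal (Bk : W -> set X) :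
  (forall k, lt k ws -> bounded EE (Bk k)) ->
  (forall B, bounded EE B -> exists k, lt k ws /\ subset B (Bk k)) -> False.
Proof.
move=> HB1 HB2.
pose S k (rec : forall j, lt j k -> (X * X)%type) x :=
  (exists j (hj : lt j k), Bk j x \/ x = fst (rec j hj) \/ x = snd (rec j hj)) \/ Bk k x.
pose Q k rec (p : (X * X)%type) := fst p <> snd p /\ ~ S k rec (fst p) /\ ~ S k rec (snd p).
pose F k rec := epsilon (inhabits (x0, x0)) (fun p => (exists q, Q k rec q) -> Q k rec p).
have [h Hh] := @wf_rec W lt lt_wf _ F.
pose S' k x := (exists j, lt j k /\ (Bk j x \/ x = fst (h j) \/ x = snd (h j))) \/ Bk k x.
have HS : forall k x, S k (fun v _ => h v) x <-> S' k x.
  move=> k x; split.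
  - case=> [[j [hj H]]|H]; [left; by exists j | by right].
  - case=> [[j [hj H]]|H]; [left; by exists j, hj | by right].
have Hq : forall k, lt k ws -> fst (h k) <> snd (h k) /\ ~ S' k (fst (h k)) /\ ~ S' k (snd (h k)).
  move=> k Hk.
  have : Q k (fun v _ => h v) (h k).
    rewrite Hh; apply: (epsilon_spec (inhabits (x0, x0)) (fun p => (exists q, Q k (fun v _ => h v) q) -> Q k (fun v _ => h v) p)).
    + case: (classic (exists q, Q k (fun v _ => h v) q)) => [[q Hq]|Hn].
      * by exists q.
      * by exists (x0, x0) => /Hn.
    + have Hbnd : bounded EE (S' k).
        apply: bnd_union; last exact: HB1.
        apply: (small_union Hk (fun j x => Bk j x \/ x = fst (h j) \/ x = snd (h j))).
        move=> j Hj; apply: bnd_union; first by apply: HB1; exact: ltT Hj Hk.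
        apply: bnd_union; exact: bnd_single.
      have [a Ha] := compl_nonempty Hbnd.
      have [b Hb'] := compl_nonempty (bnd_union Hbnd (bnd_single a)).
      exists (a, b); split; [|split] => /=.
      * by move=> E; apply: Hb'; right.
      * by move/HS.
      * by move/HS => ?; apply: Hb'; left.
  move=> [H1 [H2 H3]]; split=> //; split=> H; [apply: H2|apply: H3]; exact/HS.
pose A x := exists k, lt k ws /\ x = fst (h k).
pose Y x := exists k, lt k ws /\ x = snd (h k).
have Hdisj : forall x, A x -> Y x -> False.
  move=> x [k [Hk ->]] [j [Hj E]].
  have [Hk1 [Hk2 Hk3]] := Hq k Hk; have [Hj1 [Hj2 Hj3]] := Hq j Hj.
  case: (ltTri j k) => [Hl|[Ee|Hl]].
  - apply: Hk2; left; exists j; split=> //; by right; right.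
  - by subst j; apply: Hk1.
  - apply: Hj3; left; exists k; split=> //; by right; left.
case: (Hsplit A Y Hdisj) => HAY.
- have [k [Hk Hsub]] := HB2 _ HAY.
  have [_ [H2 _]] := Hq k Hk; apply: H2; right; apply: Hsub; by exists k.
- have [k [Hk Hsub]] := HB2 _ HAY.
  have [_ [_ H3]] := Hq k Hk; apply: H3; right; apply: Hsub; by exists k.
Qed.

Lemma U_nge C : cofinal_BX EE C -> ~ card_le C U.
Proof.
move=> HC [f [Hf1 Hf2]].
pose Bk k x := exists c, C c /\ f c = G k /\ c x.
apply: (@diagonal Bk).
- move=> k _.
  case: (classic (exists c0, C c0 /\ f c0 = G k)) => [[c0 [Cc0 E0]]|Hn].
  + apply: (bnd_sub ((proj1 HC) _ Cc0)) => x [c [Cc [Ec cx]]].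
    have := Hf2 c c0 Cc Cc0; rewrite Ec E0 => /(_ (fun _ => conj id id)) Hs.
    exact/Hs.
  + apply: (bnd_sub (bnd_single x0)) => x [c [Cc [Ec _]]]; exfalso; apply: Hn; by exists c.
- move=> B HB; have [c [Cc Hc]] := (proj2 HC) _ HB.
  have [j [Hj Ej]] := Hf1 c Cc.
  exists j; split=> // x Bx; exists c; split=> //; split; [by [] | exact: Hc].
Qed.

Lemma main_wo : add_lt_cof EE.
Proof.
exists U; split; [exact: U_in | split; [exact: U_noub|]].
by move=> C HC; split; [exact: U_le | exact: U_nge].
Qed.

End Wo.
End Ball.

Definition ltO (X : Type) (R : X -> X -> Prop) (u v : option X) : Prop :=
  match u, v with
  | Some x, Some y => R x y /\ x <> y
  | Some _, None => True
  | None, _ => False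
  end.

Theorem proposition6p2 (X : Type) (EE : relation X -> Prop) :
  is_ballean EE -> ultradiscrete EE -> add_lt_cof EE.
Proof.
move=> Hb [[Hunb Hdisc] Hun].
have [x0 _] : exists x : X, True.
  apply: NNPP => Hn; apply: Hun; exists (fun _ => True), (fun _ => True).
  split=> //; split=> // E HE.
  have [B [[F [x _]] _]] := Hdisc E HE.
  by exfalso; apply: Hn; exists x.
have Hsplit : forall A Y : set X, (forall x, A x -> Y x -> False) ->
    bounded EE A \/ bounded EE Y.
  move=> A Y Hd; apply: NNPP => Hn; apply: Hun; exists A, Y.
  split; [by move=> H; apply: Hn; left|split; [by move=> H; apply: Hn; right|]].
  move=> E HE; have [B [HB HBd]] := Hdisc E HE.
  have HI := bnd_img Hb E HE HB.
  apply: (bnd_sub HI).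
  move=> y [[a [Aa Eay]] [b [Yb Eby]]].
  case: (classic (B a)) => Ba; first by exists a.
  case: (classic (B b)) => Bb; first by exists b.
  have ea : y = a by apply/(HBd a Ba y).
  have eb : y = b by apply/(HBd b Bb y).
  by exfalso; apply: (Hd a) => //; rewrite -ea eb.
have [R [RT [RA [RTot RMin]]]] := wo_prop X.
have ltT : forall u v w, ltO R u v -> ltO R v w -> ltO R u w.
  case=> [x|] [y|] [z|] //=.
  move=> [Rxy nxy] [Ryz nyz]; split; first exact: RT Rxy Ryz.
  by move=> E; subst z; apply: nxy; apply: RA.
have ltTri : forall u v, ltO R u v \/ u = v \/ ltO R v u.
  case=> [x|] [y|] /=; try by [left|right; left|right; right].
  case: (classic (x = y)) => [->|nxy]; first by right; left.
  case: (RTot x y) => H; [left | right; right]; split=> //.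
  by move=> E; apply: nxy.
have minP : forall P : option X -> Prop, (exists w, P w) ->
    exists m, P m /\ forall v, ltO R v m -> ~ P v.
  move=> P [w Pw].
  case: (classic (exists x, P (Some x))) => [Hs|Hn].
  - have [m [Pm Hm]] := RMin _ Hs.
    exists (Some m); split=> // [[y|]] //= [Rym nym] Py.
    by apply: nym; apply: RA => //; apply: Hm.
  - exists None; split.
    + case: w Pw => [x Px|//]; exfalso; apply: Hn; by exists x.
    + case=> [y|] //= _ Py; apply: Hn; by exists y.
have HBadN : Bad EE (ltO R) None.
  exists (fun w => match w with Some x => fun y => y = x | None => fun _ => False end).
  split.
  - case=> [x|] //= _; exact: (bnd_single Hb).
  - move=> H; apply: Hunb; apply: (bnd_sub H) => x _; by exists (Some x).
have [ws [[G [HGb HGu]] Hmin]] := minP _ (ex_intro _ None HBadN).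
exact: (main_wo Hb Hunb Hsplit x0 ltT ltTri minP ws G HGb HGu Hmin).
Qed.
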